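(* For every $M\in\mathbb N$, every prime power $q$ and every $\varepsilon>0$, for almost all $a\in(\mathbb F_q^M)^\infty$ (uniform product measure), $$-\varepsilon<\liminf_{n\to\infty}\frac{d_a(n)}{n}\le\limsup_{n\to\infty}\frac{d_a(n)}{n}<\varepsilon.$$
   Context: Let $q$ be a prime power and $M\ge1$. For $a=(a_{k,m})_{k\ge1,\,1\le m\le M}\in(\mathbb F_q^M)^\infty$ and $n\in\mathbb N_0$, $L_a(n)$ is the least $L\ge0$ such that there exist $c_1,\dots,c_L\in\mathbb F_q$ with $a_{k,m}=\sum_{i=1}^L c_i a_{k-i,m}$ for all $L<k\le n$ and all $1\le m\le M$; $L_a(0)=0$. The linear complexity deviation is $d_a(n)=L_a(n)-\lceil nM/(M+1)\rceil$. *)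

(* Defs.v *)
From mathcomp Require Import all_boot all_order all_algebra all_field.
From mathcomp Require Import all_classical all_reals.
From mathcomp Require Import topology normedtype sequences.
Set Implicit Arguments. Unset Strict Implicit. Unset Printing Implicit Defensive.
Import Order.TTheory GRing.Theory Num.Theory.

(* A sequence a in (F^M)^oo is a function  a : nat -> {ffun 'I_M -> F},
   where  a k  represents the paper's a_{k+1} (the paper indexes from 1).
   [entry a k m] is the paper's a_{k,m} for k >= 1. *)
Definition entry (F : finFieldType) (M : nat)
  (a : nat -> {ffun 'I_M -> F}) (k : nat) (m : 'I_M) : F := a k.-1 m.

Definition lin_rec (F : finFieldType) (M : nat)
  (a : nat -> {ffun 'I_M -> F}) (n L : nat) : Prop :=
  exists c : 'I_L -> F, forall k : nat, (L < k <= n)%N -> forall m : 'I_M,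
    entry a k m = (\sum_(i < L) c i * entry a (k - i.+1) m)%R.

(* L = n is always admissible (vacuous condition). *)
Lemma lin_rec_n (F : finFieldType) (M : nat) (a : nat -> {ffun 'I_M -> F})
  (n : nat) : exists L, `[< lin_rec a n L >].
Proof.
exists n; apply/asboolP; exists (fun _ => 0%R) => k /andP [Hk1 Hk2].
by exfalso; move: (leq_trans Hk1 Hk2); rewrite ltnn.
Qed.

Definition lin_compl (F : finFieldType) (M : nat)
  (a : nat -> {ffun 'I_M -> F}) (n : nat) : nat :=
  ex_minn (lin_rec_n a n).

Definition ceil_div (x y : nat) : nat := (x + y.-1) %/ y.

Definition lin_dev (F : finFieldType) (M : nat)
  (a : nat -> {ffun 'I_M -> F}) (n : nat) : int :=
  (Posz (lin_compl a n) - Posz (ceil_div (n * M) M.+1))%R.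

Definition cylinder (F : finFieldType) (M : nat) (w : seq {ffun 'I_M -> F})
  (a : nat -> {ffun 'I_M -> F}) : Prop :=
  forall k, (k < size w)%N -> a k = nth (a k) w k.

(* Null set for the uniform product measure on (F^M)^oo: for every delta > 0
   it can be covered by countably many cylinders of total measure <= delta,
   the cylinder of prefix w having measure (q^M)^(-|w|).  This is exactly
   "outer measure zero" for the product measure (Caratheodory extension of
   the cylinder premeasure). *)
Definition prod_null (R : realType) (F : finFieldType) (M : nat)
  (S : (nat -> {ffun 'I_M -> F}) -> Prop) : Prop :=
  forall delta : R, (0 < delta)%R ->
    exists w : nat -> seq {ffun 'I_M -> F},
      (forall a, S a -> exists i, cylinder (w i) a) /\
      (forall N, (\sum_(i < N) ((#|F| ^ M)%:R ^- size (w i)) <= delta)%R).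

Definition prod_ae (R : realType) (F : finFieldType) (M : nat)
  (P : (nat -> {ffun 'I_M -> F}) -> Prop) : Prop :=
  prod_null R (fun a => ~ P a).

(* Main.v *)
Require Import Defs.
From mathcomp Require Import all_boot all_order all_algebra all_field.
From mathcomp Require Import all_classical all_reals.
From mathcomp Require Import topology normedtype sequences.
From mathcomp Require Import zify ring lra.
Import numFieldNormedType.Exports.
Import Order.TTheory GRing.Theory Num.Theory.
Set Implicit Arguments. Unset Strict Implicit.

Section Comb.
Variable F : finFieldType.
Variable M : nat.
Local Notation T := {ffun 'I_M -> F}.

Lemma lin_rec_dep (a b : nat -> T) n L :
  (forall k, (k < n)%N -> a k = b k) -> lin_rec a n L -> lin_rec b n L.
Proof.
move=> Hab [c Hc]; exists c => k Hk m.
have [H1 H2] := andP Hk.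
rewrite /entry -Hab; last by lia.
have := Hc k Hk m; rewrite /entry => ->; apply: eq_bigr => i _; rewrite Hab //.
have := ltn_ord i; lia.
Qed.

Lemma lin_compl_dep (a b : nat -> T) n :
  (forall k, (k < n)%N -> a k = b k) -> lin_compl a n = lin_compl b n.
Proof.
move=> Hab; rewrite /lin_compl; apply: eq_ex_minn => L.
apply/asboolP/asboolP; first exact: lin_rec_dep.
by apply: lin_rec_dep => k /Hab ->.
Qed.

Lemma lin_complP (a : nat -> T) n : lin_rec a n (lin_compl a n).
Proof. by rewrite /lin_compl; case: ex_minnP => L /asboolP. Qed.

Lemma lin_compl_min (a : nat -> T) n L : lin_rec a n L -> (lin_compl a n <= L)%N.
Proof.
by move=> H; rewrite /lin_compl; case: ex_minnP => L' _; apply; apply/asboolP.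
Qed.

Lemma lin_rec_mono (a : nat -> T) n L L' :
  (L <= L')%N -> lin_rec a n L -> lin_rec a n L'.
Proof.
move=> LL [c Hc].
pose cn (i : nat) := if insub i is Some o then c o else 0%R.
exists (fun j : 'I_L' => cn j) => k /andP[H1 H2] m.
rewrite (Hc k); last by apply/andP; split => //; lia.
rewrite (eq_bigr (fun i : 'I_L => cn i * entry a (k - i.+1) m)%R); last first.
  by move=> i _; rewrite /cn valK.
rewrite (big_ord_widen L' (fun i => cn i * entry a (k - i.+1) m)%R LL).
rewrite big_mkcond /=; apply: eq_bigr => i _.
case: ifP => // h; rewrite /cn insubF ?mul0r //.
Qed.

Lemma lin_compl_le (a : nat -> T) n : (lin_compl a n <= n)%N.
Proof.
apply: lin_compl_min; exists (fun _ => 0%R) => k /andP[H1 H2]; lia.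
Qed.


Definition ext n (p : {ffun 'I_n -> T}) (k : nat) : T :=
  if insub k is Some i then p i else 0%R.
Arguments ext {n}.

Lemma ext_lt n (p : {ffun 'I_n -> T}) k (h : (k < n)%N) : ext p k = p (Ordinal h).
Proof. by rewrite /ext insubT. Qed.

Lemma ext_ge n (p : {ffun 'I_n -> T}) k : (n <= k)%N -> ext p k = 0%R.
Proof. by move=> h; rewrite /ext insubF // ltnNge h. Qed.

Lemma ext_eq n (p1 p2 : {ffun 'I_n -> T}) :
  (forall k, (k < n)%N -> ext p1 k = ext p2 k) -> p1 = p2.
Proof.
move=> H; apply/ffunP => i; have := H i (ltn_ord i).
rewrite !(ext_lt _ (ltn_ord i)).
have -> : Ordinal (ltn_ord i) = i by apply: val_inj.
done.
Qed.

End Comb.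

Lemma card_exists_le (I U : finType) (P : I -> pred U) :
  (#|[set u | [exists i, P i u]]| <= \sum_i #|[set u | P i u]|)%N.
Proof.
rewrite -sum1dep_card.
rewrite (eq_bigr (fun i => \sum_u (if P i u then 1 else 0))%N); last first.
  by move=> i _; rewrite -sum1dep_card big_mkcond.
rewrite exchange_big big_mkcond /=; apply: leq_sum => u _.
case: existsP => [[i Hi]|] //.
by rewrite (bigD1 i) //= Hi.
Qed.


Section Down.
Variable F : finFieldType.
Variable M : nat.
Local Notation T := {ffun 'I_M -> F}.

Definition recc n L (c : {ffun 'I_L -> F}) (p : {ffun 'I_n -> T}) : bool :=
  `[< forall k, (L < k <= n)%N -> forall m : 'I_M,
    entry (ext p) k m = (\sum_(i < L) c i * entry (ext p) (k - i.+1) m)%R >].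

Lemma recc_inj n L (hL : (L <= n)%N) (c : {ffun 'I_L -> F}) :
  {in [set p | recc c p] &, injective (fun p : {ffun 'I_n -> T} =>
      [ffun i : 'I_L => p (widen_ord hL i)])}.
Proof.
move=> p1 p2; rewrite !inE => /asboolP H1 /asboolP H2 /ffunP E.
apply: ext_eq => k; elim/ltn_ind: k => k IH hk.
case: (ltnP k L) => hkL.
  have := E (Ordinal hkL); rewrite !ffunE !(ext_lt _ hk).
  by have -> : widen_ord hL (Ordinal hkL) = Ordinal hk by apply: val_inj.
apply/ffunP => m.
have hk' : (L < k.+1 <= n)%N by apply/andP; split.
have := H1 _ hk' m; have := H2 _ hk' m; rewrite /entry /= => -> ->.
apply: eq_bigr => i _; rewrite IH //; have := ltn_ord i; lia.
Qed.

Lemma card_recc_le n L (hL : (L <= n)%N) (c : {ffun 'I_L -> F}) :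
  (#|[set p : {ffun 'I_n -> T} | recc c p]| <= (#|F| ^ M) ^ L)%N.
Proof.
rewrite -(card_in_imset (@recc_inj n L hL c)).
apply: leq_trans (max_card _) _.
by rewrite card_ffun card_ffun !card_ord.
Qed.

Lemma card_rec_le n L (hL : (L <= n)%N) :
  (#|[set p : {ffun 'I_n -> T} | `[< lin_rec (ext p) n L >]]|
     <= #|F| ^ L * (#|F| ^ M) ^ L)%N.
Proof.
apply: leq_trans (_ : #|[set p : {ffun 'I_n -> T} | [exists c : {ffun 'I_L -> F}, recc c p]]| <= _)%N.
  apply: subset_leq_card; apply/fintype.subsetP => p; rewrite !inE => -[c Hc].
  apply/fintype.existsP; exists [ffun i => c i]; apply/asboolP => k Hk m.
  rewrite Hc //; apply: eq_bigr => i _; by rewrite ffunE.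
apply: leq_trans (card_exists_le _) _.
apply: leq_trans (_ : \sum_(c : {ffun 'I_L -> F}) (#|F| ^ M) ^ L <= _)%N.
  by apply: leq_sum => c _; apply: card_recc_le.
by rewrite sum_nat_const card_ffun !card_ord.
Qed.
End Down.

Section Up.
Variable F : finFieldType.
Variable M : nat.
Local Notation T := {ffun 'I_M -> F}.
Variables n L0 : nat.
Hypothesis hL0 : (L0 <= n)%N.
Local Notation Ix := ('I_(n - L0) * 'I_M)%type.
Local Notation NI := #|{: Ix}|.
Local Open Scope ring_scope.

Definition coef (p : {ffun 'I_n -> T}) (y : Ix) (j : 'I_L0) : F :=
  ext p (L0 + y.1 - j.+1) y.2.

Definition Amx (p : {ffun 'I_n -> T}) : 'M[F]_(NI, L0) :=
  \matrix_(x, j) coef p (enum_val x) j.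

Lemma rowfree_rec p : row_free (Amx p) -> lin_rec (ext p) n L0.
Proof.
move=> rf.
have rfB : row_full (Amx p)^T%R by rewrite /row_full mxrank_tr.
pose v : 'rV[F]_NI := \row_(x < NI) ext p (L0 + (enum_val x : Ix).1)%N (enum_val x : Ix).2.
have /submxP [D HD] := submx_full v rfB.
exists (fun j => D 0%R j) => k /andP [h1 h2] m.
have hr : (k - L0 - 1 < n - L0)%N by lia.
pose y : Ix := (Ordinal hr, m).
have := congr1 (fun A : 'M[F]_(1, NI) => A 0%R (enum_rank y)) HD.
rewrite !mxE enum_rankK /= /entry.
have -> : (L0 + (k - L0 - 1) = k.-1)%N by lia.
move=> ->; apply: eq_bigr => j _; rewrite !mxE enum_rankK /coef /=.
congr (_ * ext p _ m)%R; have := ltn_ord j; lia.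
Qed.

Lemma notrec_ker p : ~ lin_rec (ext p) n L0 ->
  exists lam : 'rV[F]_NI, lam != 0%R /\ (lam *m Amx p = 0)%R.
Proof.
move=> nr.
have : ~~ row_free (Amx p) by apply/negP => /rowfree_rec.
rewrite -kermx_eq0 => /rowV0Pn [lam Hl Hn].
by exists lam; split => //; apply/sub_kermxP.
Qed.


Lemma card_ker_le (lam : 'rV[F]_NI) : lam != 0 ->
  (#|[set p : {ffun 'I_n -> T} | (lam *m Amx p == 0)%R]| <= #|F| ^ (n * M - L0))%N.
Proof.
move=> lam0.
have [x0 Hx0] : exists x0, lam 0 x0 != 0.
  case: (boolP [exists x, lam 0 x != 0]) => [/fintype.existsP //|/fintype.existsPn H].
  exfalso; move/negP: lam0; apply; apply/eqP/rowP => x; rewrite mxE.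
  by have := H x; rewrite negbK => /eqP.
pose ms := (enum_val x0).2.
pose Pr := fun r : 'I_(n - L0) => lam 0 (enum_rank (r, ms)) != 0.
have Pr0 : Pr (enum_val x0).1 by rewrite /Pr /ms -surjective_pairing enum_valK.
case: (arg_maxnP (fun r => val r) Pr0) => rs Prs Hmax.
have hs : forall j : 'I_L0, (rs + j < n)%N.
  by move=> j; have := ltn_ord rs; have := ltn_ord j; lia.
pose s := fun j : 'I_L0 => ((Ordinal (hs j), ms) : 'I_n * 'I_M).
pose S := [set s j | j : 'I_L0].
have Sin : forall y, y \in S -> y.2 = ms /\ (rs <= y.1 < rs + L0)%N.
  by move=> y /imsetP [j _ ->] /=; split => //; have := ltn_ord j; lia.
have cardS : #|S| = L0.
  rewrite card_imset ?card_ord // => j1 j2 /(congr1 (fun y => val y.1)) /= /eqP.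
  by rewrite eqn_add2l => /eqP; apply: val_inj.
pose phi := fun p : {ffun 'I_n -> T} =>
  ([ffun y : 'I_n * 'I_M => if y \in S then 0 else p y.1 y.2] : {ffun 'I_n * 'I_M -> F}).
have inj : {in [set p | (lam *m Amx p == 0)%R] &, injective phi}.
  move=> p1 p2; rewrite !inE => /eqP K1 /eqP K2 E.
  pose D i m := ext p1 i m - ext p2 i m.
  have Da : forall i m, D i m != 0 -> [/\ (i < n)%N, m = ms & (rs <= i < rs + L0)%N].
    move=> i m; rewrite /D; case: (ltnP i n) => hi; last by rewrite !ext_ge // subrr eqxx.
    rewrite !(ext_lt _ hi) => Hne.
    case: (boolP ((Ordinal hi, m) \in S)) => [/Sin [/= -> ?] // | nS].
    move: Hne; have := congr1 (fun f : {ffun 'I_n * 'I_M -> F} => f (Ordinal hi, m)) E.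
    by rewrite /phi !ffunE /= (negbTE nS) => ->; rewrite subrr eqxx.
  have Keq : forall j : 'I_L0,
      \sum_x lam 0 x * D (L0 + (enum_val x).1 - j.+1)%N (enum_val x).2 = 0.
    move=> j.
    have E1 : \sum_x lam 0 x * coef p1 (enum_val x) j = 0.
      have := congr1 (fun A : 'M[F]_(1, L0) => A 0 j) K1; rewrite !mxE => H; apply: etrans _ H.
      by apply: eq_bigr => x _; rewrite /Amx mxE.
    have E2 : \sum_x lam 0 x * coef p2 (enum_val x) j = 0.
      have := congr1 (fun A : 'M[F]_(1, L0) => A 0 j) K2; rewrite !mxE => H; apply: etrans _ H.
      by apply: eq_bigr => x _; rewrite /Amx mxE.
    rewrite (eq_bigr (fun x => lam 0 x * coef p1 (enum_val x) j - lam 0 x * coef p2 (enum_val x) j)).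
      by rewrite sumrB E1 E2 subrr.
    by move=> x _; rewrite /D /coef mulrBr.
  apply: ext_eq => k hk; apply/ffunP => m; apply/eqP; rewrite -subr_eq0.
  apply/negPn/negP => Hne.
  have exP : exists i, D i ms != 0 by exists k; have [_ <- _] := Da _ _ Hne.
  case: (ex_minnP exP) => i0 Hi0 Hmin.
  have [hi0n _ /andP [hi1 hi2]] := Da _ _ Hi0.
  have hj0 : (L0 + rs - i0 - 1 < L0)%N by lia.
  have := Keq (Ordinal hj0).
  rewrite (bigD1 (enum_rank (rs, ms))) //= enum_rankK /=.
  rewrite big1 ?addr0; last first.
    move=> x Hx; case: (eqVneq (lam 0 x) 0) => [-> |Hl]; first by rewrite mul0r.
    set pos := (L0 + (enum_val x).1 - (L0 + rs - i0 - 1).+1)%N.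
    case: (eqVneq (D pos (enum_val x).2) 0) => [-> |HD]; first by rewrite mulr0.
    exfalso; have [_ hm /andP[hp1 hp2]] := Da _ _ HD.
    have HD' : D pos ms != 0 by rewrite -hm.
    have h1 := Hmin _ HD'.
    have Prx : Pr (enum_val x).1 by rewrite /Pr -hm -surjective_pairing enum_valK.
    have h2 : ((enum_val x).1 <= rs)%N := Hmax _ Prx.
    have hr : ((enum_val x).1 : nat) = rs by rewrite /pos in h1; lia.
    move/negP: Hx; apply; apply/eqP.
    rewrite -[x]enum_valK; congr enum_rank.
    by rewrite [enum_val x]surjective_pairing -hm; congr pair; apply: val_inj.
  have -> : (L0 + rs - (L0 + rs - i0 - 1).+1 = i0)%N by lia.
  by move/eqP; apply/negP; apply: mulf_neq0.
rewrite -(card_in_imset inj).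
apply: (@leq_trans #|pffun_on (0 : F) (~: S) predT|).
  apply: subset_leq_card; apply/fintype.subsetP => f /imsetP [p _ ->].
  apply/pffun_onP; split; last by move=> ? _.
  apply/fintype.subsetP => y; rewrite !inE /phi ffunE.
  by case: (y \in S); rewrite ?eqxx.
rewrite card_pffun_on.
have := cardsC S; rewrite cardS card_prod !card_ord => h.
have -> : #|~: S| = (n * M - L0)%N by lia.
done.
Qed.


Lemma card_notrec_le :
  (#|[set p : {ffun 'I_n -> T} | ~~ `[< lin_rec (ext p) n L0 >]]|
     <= #|F| ^ ((n - L0) * M) * #|F| ^ (n * M - L0))%N.
Proof.
apply: (@leq_trans
  #|[set p | [exists lam : 'rV[F]_NI, (lam != 0) && (lam *m Amx p == 0)%R]]|).
  apply: subset_leq_card; apply/fintype.subsetP => p; rewrite !inE => /asboolPn nr.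
  have [lam [H1 H2]] := notrec_ker nr; apply/fintype.existsP; exists lam.
  by rewrite H1 H2 ?eqxx.
apply: leq_trans (card_exists_le _) _.
apply: (@leq_trans (\sum_(lam : 'rV[F]_NI) #|F| ^ (n * M - L0))).
  apply: leq_sum => lam _; case: (eqVneq lam 0) => [->|nz].
    apply: (@leq_trans 0); last done.
    rewrite leqn0 cards_eq0; apply/eqP/setP => p; by rewrite !inE ?eqxx.
  apply: leq_trans (card_ker_le nz); apply: subset_leq_card.
  apply/fintype.subsetP => p; rewrite !inE; by case/andP.
by rewrite sum_nat_const card_mx card_prod !card_ord mul1n.
Qed.
End Up.

Section Bad.
Variable F : finFieldType.
Variable M : nat.
Local Notation T := {ffun 'I_M -> F}.

Definition badp (t n : nat) (p : {ffun 'I_n -> T}) : bool :=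
  (n < t * `|lin_dev (ext p) n|)%N.

Lemma card_bad t n : (0 < t)%N -> (0 < M)%N ->
  (#|[set p : {ffun 'I_n -> T} | badp t p]| * #|F| ^ (n %/ t)
     <= 2 * #|F| ^ (n * M + M))%N.
Proof.
move=> t0 M0.
have Q0 : (0 < #|F|)%N by apply/card_gt0P; exists 0%R.
set e := (n %/ t)%N.
set C := ceil_div (n * M) M.+1.
have hC1 : (C * M.+1 <= n * M + M)%N.
  rewrite /C /ceil_div /=; exact: leq_divM.
have hC2 : (n * M < C.+1 * M.+1)%N.
  have := @ltn_ceil (n * M + M) M.+1 isT; rewrite /C /ceil_div /=; lia.
have he : (e * t <= n)%N by exact: leq_divM.
have he2 : (n < e.+1 * t)%N by exact: ltn_ceil.
pose A := [set p : {ffun 'I_n -> T} | (C + e <= n)%N && ~~ `[< lin_rec (ext p) n (C + e) >]].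
pose B := [set p : {ffun 'I_n -> T} | `[< lin_rec (ext p) n (C - e.+1) >]].
have sub : [set p | badp t p] \subset A :|: B.
  apply/fintype.subsetP => p; rewrite !inE /badp /lin_dev -/C.
  have hL := lin_compl_le (ext p) n.
  have hR := lin_complP (ext p) n.
  have hm := @lin_compl_min _ _ (ext p) n.
  set L := lin_compl (ext p) n in hL hR hm *.
  case: (leqP C L) => hCL.
    rewrite distnEl // => hb.
    have hLC : (e < L - C)%N.
      rewrite ltnNge; apply/negP => h; nia.
    apply/orP; left; apply/andP; split; first lia.
    apply/asboolPn => /hm; lia.
  rewrite distnEr ?(ltnW hCL) // => hb.
  have hLC : (e < C - L)%N.
    rewrite ltnNge; apply/negP => h; nia.
  apply/orP; right; apply/asboolP; apply: lin_rec_mono hR; lia.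
have cA : (#|A| * #|F| ^ e <= #|F| ^ (n * M + M))%N.
  case: (leqP (C + e) n) => hCe; last first.
    rewrite (_ : A = finset.set0) ?cards0 //; apply/setP => p; rewrite !inE.
    by rewrite leqNgt hCe.
  apply: (@leq_trans (#|F| ^ ((n - (C + e)) * M) * #|F| ^ (n * M - (C + e)) * #|F| ^ e)).
    rewrite leq_mul2r; apply/orP; right.
    apply: leq_trans (card_notrec_le F M hCe); apply: subset_leq_card.
    by apply/fintype.subsetP => p; rewrite !inE hCe.
  rewrite -!expnD leq_pexp2l //; last first.
  nia.
have cB : (#|B| * #|F| ^ e <= #|F| ^ (n * M + M))%N.
  have hL1 : (C - e.+1 <= n)%N.
    nia.
  apply: (@leq_trans (#|F| ^ (C - e.+1) * (#|F| ^ M) ^ (C - e.+1) * #|F| ^ e)).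
    by rewrite leq_mul2r card_rec_le ?orbT.
  rewrite -expnM -!expnD leq_pexp2l //.
  nia.
apply: (@leq_trans (#|A :|: B| * #|F| ^ e)).
  by rewrite leq_mul2r subset_leq_card ?orbT.
apply: (@leq_trans ((#|A| + #|B|) * #|F| ^ e)).
  by rewrite leq_mul2r leq_card_setU orbT.
rewrite mulnDl; lia.
Qed.
End Bad.
Section An.
Variable R : realType.
Local Open Scope ring_scope.

Lemma esup_ev (u : (\bar R)^nat) (c : \bar R) N :
  (forall n, (N <= n)%N -> (u n <= c)%E) -> (limn_esup u <= c)%E.
Proof.
move=> H; rewrite limn_esup_lim; apply: lime_le; first exact: is_cvg_esups.
near=> m; apply: ereal.ge_ereal_sup => _ [k /= mk <-]; apply: H.
apply: leq_trans mk; near: m; by exists N.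
Unshelve. all: by end_near. Qed.

Lemma good_seq (d : nat -> int) (t : nat) (eps : R) N :
  0 < eps -> 2 <= eps * t%:R ->
  (forall n, (N <= n)%N -> (t * `|d n| <= n)%N) ->
  ((- eps)%:E < limn_einf (fun n => ((d n)%:~R / n%:R : R)%:E))%E /\
    (limn_einf (fun n => ((d n)%:~R / n%:R : R)%:E)
       <= limn_esup (fun n => ((d n)%:~R / n%:R : R)%:E))%E /\
    (limn_esup (fun n => ((d n)%:~R / n%:R : R)%:E) < eps%:E)%E.
Proof.
move=> e0 et H.
have B : forall n, (N.+1 <= n)%N -> `|(d n)%:~R / n%:R : R| <= eps / 2.
  move=> n hn; have hn0 : (0 < n)%N by lia.
  have n0 : (0 : R) < n%:R by rewrite ltr0n.
  rewrite normrM normfV normr_nat ler_pdivrMr // -intr_norm -natr_absz.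
  have := H n (ltnW hn); rewrite -(ler_nat R) natrM => h.
  have d0 : (0 : R) <= `|d n|%:R by [].
  have t0 : (0 : R) <= t%:R by [].
  set D := (`|d n|%:R : R) in h d0 *; set tt := (t%:R : R) in h et t0 *.
  nra.
have up : (limn_esup (fun n => ((d n)%:~R / n%:R : R)%:E) <= (eps / 2)%:E)%E.
  apply: (@esup_ev _ _ N.+1) => n hn; rewrite lee_fin.
  exact: le_trans (ler_norm _) (B n hn).
have dn : (limn_esup (\- (fun n => ((d n)%:~R / n%:R : R)%:E)) <= (eps / 2)%:E)%E.
  apply: (@esup_ev _ _ N.+1) => n hn; rewrite /= lee_fin.
  apply: le_trans (B n hn); rewrite -normrN; exact: ler_norm.
split; last split.
- rewrite /limn_einf lteNr /= (le_lt_trans dn) // lte_fin; lra.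
- exact: limn_einf_sup.
- rewrite (le_lt_trans up) // lte_fin; lra.
Qed.
End An.
Section Sums.
Variable R : realType.
Local Open Scope ring_scope.
Local Notation x := ((2 : R)^-1).

Lemma x_ge0 : 0 <= x. Proof. by rewrite invr_ge0. Qed.

Lemma geo_eq N : \sum_(i < N) x ^+ i = 2 - 2 * x ^+ N.
Proof.
elim: N => [|N IH]; first by rewrite big_ord0 expr0 mulr1 subrr.
rewrite big_ord_recr /= IH exprS.
have h : 2 * x = 1 by rewrite divff // pnatr_eq0.
set y := x ^+ N; have -> : 2 * (x * y) = y by rewrite mulrA h mul1r.
lra.
Qed.

Lemma geo_le N : \sum_(i < N) x ^+ i <= 2.
Proof. rewrite geo_eq; have := exprn_ge0 N x_ge0; lra. Qed.

Lemma big_shift0 (F : nat -> R) m n :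
  \sum_(m <= i < n) F i = \sum_(0 <= i < n - m) F (i + m)%N.
Proof. by rewrite -{1}[m]add0n big_addn. Qed.

Lemma blk_eq t K : (0 < t)%N ->
  \sum_(0 <= n < t * K) x ^+ (n %/ t) = t%:R * \sum_(j < K) x ^+ j.
Proof.
move=> t0; elim: K => [|K IH]; first by rewrite muln0 big_geq // big_ord0 mulr0.
rewrite (big_cat_nat (n := t * K)) //=; last by rewrite leq_mul2l leqnSn orbT.
rewrite IH big_ord_recr /= mulrDr; congr (_ + _).
rewrite big_shift0 mulnS addnK.
rewrite (eq_big_nat _ _ (F2 := fun _ => x ^+ K)); last first.
  move=> i /andP [_ hi]; congr (_ ^+ _).
  by rewrite addnC mulnC divnMDl // divn_small // addn0.
by rewrite sumr_const_nat subn0 mulr_natl.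
Qed.

Lemma blk_le t N : (0 < t)%N -> \sum_(0 <= n < N) x ^+ (n %/ t) <= 2 * t%:R.
Proof.
move=> t0.
apply: (@le_trans _ _ (\sum_(0 <= n < t * N) x ^+ (n %/ t))).
  rewrite (big_cat_nat (n := N) (m := 0) (p := t * N)) //=; last first.
    by rewrite leq_pmull.
  rewrite lerDl; apply: sumr_ge0 => i _; exact: exprn_ge0 x_ge0.
rewrite blk_eq // mulrC ler_wpM2r ?ler0n //; exact: geo_le.
Qed.

Lemma tail_le t J N : (0 < t)%N ->
  \sum_(t * J <= n < N) x ^+ (n %/ t) <= x ^+ J * (2 * t%:R).
Proof.
move=> t0; case: (leqP N (t * J)) => h.
  by rewrite big_geq // mulr_ge0 ?exprn_ge0 ?x_ge0 // mulr_ge0 ?ler0n.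
rewrite big_shift0.
rewrite (eq_big_nat _ _ (F2 := fun i => x ^+ J * x ^+ (i %/ t))); last first.
  by move=> i _; rewrite -exprD addnC mulnC divnMDl.
rewrite -mulr_sumr ler_wpM2l ?exprn_ge0 ?x_ge0 //; exact: blk_le.
Qed.

Lemma exJ (c : R) : 0 < c -> exists J, x ^+ J <= c.
Proof.
move=> c0; exists (Num.Def.trunc c^-1).
set J := Num.Def.trunc c^-1.
have h1 : c^-1 < J.+1%:R := truncnS_gt _.
have h2 : (J.+1 <= 2 ^ J)%N := ltn_expl J (isT : (1 < 2)%N).
have h3 : c^-1 < (2 : R) ^+ J.
  apply: lt_le_trans h1 _; rewrite -natrX ler_nat //.
have p0 : (0 : R) < 2 ^+ J by rewrite exprn_gt0.
rewrite exprVn -div1r ler_pdivrMr // mulrC -ler_pdivrMr // div1r.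
exact: ltW.
Qed.

End Sums.
Section Help.
Variable R : realType.
Local Open Scope ring_scope.
Local Notation x := ((2 : R)^-1).

Lemma single_eq (N j : nat) (c : R) :
  \sum_(i < N) (if j == i then c else 0) = if (j < N)%N then c else 0.
Proof.
elim: N => [|N IH]; first by rewrite big_ord0.
rewrite big_ord_recr /= IH.
case: (eqVneq j N) => [->|ne]; first by rewrite ltnn ltnSn add0r.
have -> : (j < N.+1)%N = (j < N)%N by rewrite ltnS leq_eqVlt (negbTE ne).
by rewrite addr0.
Qed.

Lemma single_le (N j : nat) (c : R) : 0 <= c ->
  \sum_(i < N) (if j == i then c else 0) <= c.
Proof. by move=> c0; rewrite single_eq; case: ifP. Qed.

Lemma rb (Q M b e n : nat) : (1 < Q)%N ->
  (b * Q ^ e <= 2 * Q ^ (n * M + M))%N ->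
  b%:R * ((Q ^ M)%:R ^- n) <= 2 * (Q ^ M)%:R * (x ^+ e).
Proof.
move=> Q1 H.
have h2 : (b * 2 ^ e <= 2 * Q ^ M * Q ^ (M * n))%N.
  apply: (@leq_trans (b * Q ^ e)%N).
    rewrite leq_mul2l; case: e {H} => [|e]; first by rewrite orbT.
    by rewrite leq_exp2r // Q1 orbT.
  have -> : (2 * Q ^ M * Q ^ (M * n) = 2 * Q ^ (n * M + M))%N.
    by rewrite -mulnA -expnD (_ : (M + M * n = n * M + M)%N) //; lia.
  done.
have P0 : (0 : R) < (Q ^ (M * n))%:R by rewrite ltr0n expn_gt0; lia.
have Y0 : (0 : R) < 2 ^+ e by rewrite exprn_gt0.
rewrite -natrX -expnM exprVn ler_pdivrMr // mulrAC ler_pdivlMr //.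
by rewrite -natrX -!natrM ler_nat.
Qed.

Lemma qpow_le (q : R) k : 2 <= q -> q ^- k <= x ^+ k.
Proof.
move=> q2; rewrite -exprVn; apply: lerXn2r.
- by rewrite nnegrE invr_ge0; lra.
- by rewrite nnegrE invr_ge0; lra.
- by rewrite lef_pV2 ?posrE //; lra.
Qed.
End Help.
Section Pre.
Variable F : finFieldType.
Variable M : nat.
Local Notation T := {ffun 'I_M -> F}.

Definition pre n (a : nat -> T) : {ffun 'I_n -> T} := [ffun i : 'I_n => a i].
Definition seq_of n (p : {ffun 'I_n -> T}) : seq T := [seq p i | i <- enum 'I_n].

Lemma ext_pre n a k : (k < n)%N -> ext (pre n a) k = a k.
Proof. by move=> h; rewrite (ext_lt _ h) ffunE. Qed.

Lemma lin_dev_pre n a : lin_dev (ext (pre n a)) n = lin_dev a n.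
Proof. by rewrite /lin_dev (lin_compl_dep (b := a)) // => k; exact: ext_pre. Qed.

Lemma size_seq_of n (p : {ffun 'I_n -> T}) : size (seq_of p) = n.
Proof. by rewrite size_map size_enum_ord. Qed.

Lemma cyl_pre n a : cylinder (seq_of (pre n a)) a.
Proof.
move=> k; rewrite size_seq_of => hk.
change k with (nat_of_ord (Ordinal hk)).
by rewrite (nth_map (Ordinal hk)) ?size_enum_ord // nth_ord_enum ffunE.
Qed.
End Pre.

Unset Implicit Arguments.

Theorem mainTheorem15 (R : realType) (F : finFieldType) (M : nat)
  (HM : (0 < M)%N) (eps : R) (Heps : (0 < eps)%R) :
  prod_ae R (fun a : nat -> {ffun 'I_M -> F} =>
    ((- eps)%:E < limn_einf (fun n => ((lin_dev a n)%:~R / n%:R : R)%:E))%E /\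
    (limn_einf (fun n => ((lin_dev a n)%:~R / n%:R : R)%:E)
       <= limn_esup (fun n => ((lin_dev a n)%:~R / n%:R : R)%:E))%E /\
    (limn_esup (fun n => ((lin_dev a n)%:~R / n%:R : R)%:E) < eps%:E)%E).
Proof.
Local Open Scope ring_scope.
rewrite /prod_ae /prod_null => delta d0.
have Q1 : (1 < #|F|)%N.
  by apply/card_gt1P; exists 0%R, 1%R; split => //; rewrite eq_sym oner_neq0.
pose QM := (#|F| ^ M)%N.
have QM2 : (2 : R) <= QM%:R.
  rewrite (ler_nat R) (leq_trans Q1) // -{1}[#|F|]expn1 leq_pexp2l //; lia.
pose t := (Num.Def.trunc (2 / eps)).+1.
have t0 : (0 < t)%N by [].
have et : 2 <= eps * t%:R.
  have := truncnS_gt (2 / eps); rewrite ltr_pdivrMr // => h.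
  by rewrite mulrC; exact: ltW.
have tR : (0 : R) < t%:R by rewrite ltr0n.
have c1 : (0 : R) < delta / (8 * t%:R * QM%:R).
  by rewrite divr_gt0 // !mulr_gt0 //; lra.
have [J HJ] := exJ c1.
have c2 : (0 : R) < delta / 4 by rewrite divr_gt0 //.
have [K HK] := exJ c2.
pose N0 := (t * J)%N.
pose X := {n : nat & {ffun 'I_n -> {ffun 'I_M -> F}}}.
pose w := fun i : nat => match @pickle_inv X i with
  | Some y => if (N0 <= tag y)%N && badp t (tagged y) then seq_of (tagged y)
              else nseq (i + K) 0%R
  | None => nseq (i + K) 0%R end.
exists w; split.
  move=> a nPa.
  have H : forall N, exists n, (N <= n)%N && (n < t * `|lin_dev a n|)%N.
    move=> N; apply: contrapT => hne; apply: nPa.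
    apply: (@good_seq R (lin_dev a) t eps N Heps et) => n hn.
    rewrite leqNgt; apply/negP => h; apply: hne; exists n; by rewrite hn h.
  have [n /andP [hn hb]] := H N0.
  exists (pickle (Tagged (fun n => {ffun 'I_n -> {ffun 'I_M -> F}}) (pre n a) : X)).
  rewrite /w pickleK_inv /= hn /badp lin_dev_pre hb /=; exact: cyl_pre.
move=> N.
set x := ((2 : R)^-1).
pose G := fun i : nat => match @pickle_inv X i with
  | Some y => if (N0 <= tag y)%N && badp t (tagged y) then (QM%:R : R) ^- tag y else 0
  | None => 0 end.
have qi0 : forall k, (0 : R) <= (QM%:R : R) ^- k.
  by move=> k; rewrite invr_ge0 exprn_ge0 // ler0n.
have G0 : forall i, 0 <= G i.
  by move=> i; rewrite /G; case: (pickle_inv i) => [y|] //; case: ifP.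
have step1 : \sum_(i < N) (QM%:R : R) ^- size (w i)
    <= \sum_(i < N) G i + \sum_(i < N) x ^+ (i + K).
  rewrite -big_split /=; apply: ler_sum => i _; rewrite /w /G.
  case: (pickle_inv i) => [y|].
    case: ifP => _.
      by rewrite size_seq_of lerDl exprn_ge0 // invr_ge0.
    by rewrite size_nseq add0r; exact: qpow_le.
  by rewrite size_nseq add0r; exact: qpow_le.
have step2 : \sum_(i < N) x ^+ (i + K) <= x ^+ K * 2.
  under eq_bigr do rewrite exprD.
  by rewrite -mulr_suml mulrC ler_wpM2l ?exprn_ge0 ?invr_ge0 // geo_le.
have step3 : \sum_(i < N) G i <= 2 * QM%:R * (x ^+ J * (2 * t%:R)).
  pose Nmax := (\max_(i < N) (if @pickle_inv X i is Some y then tag y else 0%N)).+1.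
  pose H := fun (i : nat) (n : 'I_Nmax) (p : {ffun 'I_n -> {ffun 'I_M -> F}}) =>
    if pickle (Tagged (fun n => {ffun 'I_n -> {ffun 'I_M -> F}}) p : X) == i
    then (if (N0 <= n)%N && badp t p then (QM%:R : R) ^- n else 0) else 0.
  have H0 : forall i n p, 0 <= H i n p.
    by move=> i n p; rewrite /H; case: ifP => // _; case: ifP.
  have s1 : \sum_(i < N) G i <= \sum_(i < N) \sum_(n < Nmax) \sum_p H i n p.
    apply: ler_sum => i _; rewrite /G.
    case E: (pickle_inv i) => [[n p]|]; last by do 2!(apply: sumr_ge0 => ? _).
    case: ifP => hc; last by do 2!(apply: sumr_ge0 => ? _).
    have pe : pickle (existT _ n p : X) = i by have := @pickle_invK X i; rewrite E.
    have hn : (n < Nmax)%N.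
      rewrite ltnS.
      have := leq_bigmax (F := fun i0 : 'I_N =>
        if @pickle_inv X i0 is Some y then tag y else 0%N) i.
      by rewrite /= E.
    rewrite (bigD1 (Ordinal hn)) //= (bigD1 p) //= /H pe eqxx /= hc.
    rewrite -addrA lerDl; apply: addr_ge0; apply: sumr_ge0 => j _; [exact: (H0 i (Ordinal hn) j)| apply: sumr_ge0 => j2 _; exact: H0].
  apply: le_trans s1 _.
  rewrite exchange_big /=.
  apply: (@le_trans _ _ (\sum_(n < Nmax)
     (if (N0 <= n)%N then 2 * QM%:R * x ^+ (n %/ t) else 0))).
    apply: ler_sum => n _; rewrite exchange_big /=.
    apply: (@le_trans _ _ (\sum_p (if (N0 <= n)%N && badp t p then (QM%:R : R) ^- n else 0))).
      apply: ler_sum => p _; rewrite /H.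
      apply: single_le; by case: ifP.
    case: (leqP N0 n) => h; last by rewrite big1.
    rewrite -big_mkcond sumr_const.
    have hb := @card_bad F M t n t0 HM.
    have hr := @rb R _ _ _ _ _ Q1 hb.
    set A := #|_|.
    have -> : A = #|[set p : {ffun 'I_n -> {ffun 'I_M -> F}} | badp t p]|.
      by apply: eq_card => p; rewrite inE.
    by rewrite -[_ *+ #|_|]mulr_natl.
  rewrite -(big_mkord xpredT (fun n => if (N0 <= n)%N then 2 * QM%:R * x ^+ (n %/ t) else 0)).
  apply: (@le_trans _ _ (\sum_(0 <= n < Nmax + N0) (if (N0 <= n)%N then 2 * QM%:R * x ^+ (n %/ t) else 0))).
    rewrite [X in _ <= X](big_cat_nat (n := Nmax)) //= ?leq_addr // lerDl.
    apply: sumr_ge0 => n _; case: ifP => // _; rewrite mulr_ge0 ?exprn_ge0 ?invr_ge0 //.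
    by rewrite mulr_ge0 // ler0n.
  rewrite (big_cat_nat (n := N0)) //= ?leq_addl // big1_seq ?add0r; last first.
    by move=> n /andP [_]; rewrite mem_index_iota => /andP [_ h]; rewrite leqNgt h.
  rewrite (eq_big_nat _ _ (F2 := fun n => 2 * QM%:R * x ^+ (n %/ t))); last first.
    by move=> n /andP [h _]; rewrite h.
  rewrite -mulr_sumr ler_wpM2l ?mulr_ge0 ?ler0n //.
  exact: tail_le.
apply: le_trans step1 _.
apply: le_trans (lerD step3 step2) _.
have pos8 : (0 : R) < 8 * t%:R * QM%:R by rewrite !mulr_gt0 //; lra.
have hJ : x ^+ J * (8 * t%:R * QM%:R) <= delta by rewrite -ler_pdivlMr.
have hK : x ^+ K * 4 <= delta by rewrite -ler_pdivlMr //.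
set a := x ^+ J in hJ *; set b := x ^+ K in hK *.
set tt := (t%:R : R) in hJ *; set qq := (QM%:R : R) in hJ *.
have -> : 2 * qq * (a * (2 * tt)) = (a * (8 * tt * qq)) / 2 by field.
lra.
Qed.
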